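(* There exist polynomials $u,\alpha\in k[T]$ such that $$P_2(T)^p-P_2^\sigma(T^p)=m_p\bigl(\bar P'(T)^p\,u(T)-2\alpha(T)\,\bar P(T)^p\bigr)\quad\text{in } W_2(k)[T],$$ and for such $u,\alpha$ a lift of the Frobenius of $U_0$ to $U_1$ is determined by $$F_2(x)=x^p+m_p(u(x)),\qquad F_2(y)=y^p+y^p\,m_p(\alpha(x)).$$
   Context: $k$ is a finite field of characteristic $p\neq 2$, $W_2(k)=W(k)/p^2$, and $\sigma$ is the Frobenius of $W_2(k)$ lifting $a\mapsto a^p$; for $Q=\sum b_jT^j$ set $Q^\sigma=\sum\sigma(b_j)T^j$. Let $P\in W(k)[X]$ be monic of odd degree $d=2g+1$, separable over $\operatorname{Frac}W(k)$, with separable reduction $\bar P\in k[X]$; $P_2$ is its reduction mod $p^2$. $U_0=\operatorname{Spec}k[x,y]/(y^2-\bar P(x))$ and $U_1=\operatorname{Spec}W_2(k)[x,y]/(y^2-P_2(x))$. $m_p$ denotes the map from $k$-objects to $W_2(k)$-objects induced by multiplication by $p$ (coming from the exact sequence $0\to k\xrightarrow{m_p}W_2(k)\to k\to0$), e.g. $m_p:k[T]\to W_2(k)[T]$ and $m_p:\mathcal{O}(U_0)\to\mathcal{O}(U_1)$. A lift of Frobenius on $U_1$ means a $\sigma$-semilinear ring endomorphism $F_2$ of $\mathcal{O}(U_1)$ reducing mod $p$ to $f\mapsto f^p$. *)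

(* Defs.v *)
From HB Require Import structures.
From mathcomp Require Import all_boot all_algebra finalg separable.
From mathcomp Require Import ring.
Set Implicit Arguments. Unset Strict Implicit. Unset Printing Implicit Defensive.
Import GRing.Theory.
Local Open Scope ring_scope.

(* The coordinate ring  A[x,y]/(y^2 - Q(x))  of the affine curve y^2 = Q(x)
   over a commutative ring A, realised concretely as the free A[x]-module with
   basis 1, y: an element (a, b) stands for a(x) + b(x) y, and
   (a + b y)(c + d y) = (ac + bd Q) + (ad + bc) y. *)
Section HypRing.
Variable A : comNzRingType.

Definition hyp_ring (Q : {poly A}) : Type := ({poly A} * {poly A})%type.

Variable Q : {poly A}.

HB.instance Definition _ :=
  GRing.Zmodule.copy (hyp_ring Q) ({poly A} * {poly A})%type.

Definition hyp_one : hyp_ring Q := (1, 0).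
Definition hyp_mul (a b : hyp_ring Q) : hyp_ring Q :=
  (a.1 * b.1 + a.2 * b.2 * Q, a.1 * b.2 + a.2 * b.1).

Lemma hyp_mulA : associative hyp_mul.
Proof. by case=> a1 a2 [b1 b2] [c1 c2]; rewrite /hyp_mul /=; congr pair; ring. Qed.
Lemma hyp_mulC : commutative hyp_mul.
Proof. by case=> a1 a2 [b1 b2]; rewrite /hyp_mul /=; congr pair; ring. Qed.
Lemma hyp_mul1 : left_id hyp_one hyp_mul.
Proof. by case=> a1 a2; rewrite /hyp_mul /=; congr pair; ring. Qed.
Lemma hyp_mulDl : left_distributive hyp_mul +%R.
Proof.
case=> a1 a2 [b1 b2] [c1 c2]; rewrite /hyp_mul /=.
have addE : forall u v w z : {poly A}, (u, v) + (w, z) = (u + w, v + z) :> hyp_ring Q by [].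
by rewrite !addE /=; congr pair; ring.
Qed.
Lemma hyp_one_neq0 : hyp_one != 0.
Proof. by apply/eqP => -[] /eqP; rewrite oner_eq0. Qed.

HB.instance Definition _ := GRing.Zmodule_isComNzRing.Build (hyp_ring Q)
  hyp_mulA hyp_mulC hyp_mul1 hyp_mulDl hyp_one_neq0.

Definition hyp_x : hyp_ring Q := ('X, 0).
Definition hyp_y : hyp_ring Q := (0, 1).
Definition hyp_const (c : A) : hyp_ring Q := (c%:P, 0).
Definition hyp_polx (f : {poly A}) : hyp_ring Q := (f, 0).

End HypRing.

(* Coefficientwise map between coordinate rings (used for reduction mod p,
   and for m_p : O(U_0) -> O(U_1)). *)
Definition hyp_map (A B : comNzRingType) (Q : {poly A}) (Q' : {poly B})
  (f : A -> B) (a : hyp_ring Q) : hyp_ring Q' :=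
  (map_poly f a.1, map_poly f a.2).

Definition semilinear_ring_endo (A : comNzRingType) (Q : {poly A})
  (sigma : A -> A) (F : hyp_ring Q -> hyp_ring Q) : Prop :=
  [/\ forall a b, F (a + b) = F a + F b,
      forall a b, F (a * b) = F a * F b,
      F 1 = 1 &
      forall (c : A) a, F (hyp_const Q c * a) = hyp_const Q (sigma c) * F a].

Definition frobenius_lift (A B : comNzRingType) (Q : {poly A}) (Qbar : {poly B})
  (p : nat) (sigma : A -> A) (pi : A -> B) (F : hyp_ring Q -> hyp_ring Q) : Prop :=
  semilinear_ring_endo sigma F /\
  forall a, hyp_map Qbar pi (F a) = (hyp_map Qbar pi a) ^+ p.

(* Main.v *)
Require Import Defs.
From HB Require Import structures.
From mathcomp Require Import all_boot all_algebra finalg separable.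
From mathcomp Require Import ring.
Import GRing.Theory.
Local Open Scope ring_scope.

Lemma hyp_addE (A : comNzRingType) (Q : {poly A}) (a b : hyp_ring Q) :
  a + b = (a.1 + b.1, a.2 + b.2). Proof. by []. Qed.
Lemma hyp_mulE (A : comNzRingType) (Q : {poly A}) (a b : hyp_ring Q) :
  a * b = (a.1 * b.1 + a.2 * b.2 * Q, a.1 * b.2 + a.2 * b.1). Proof. by []. Qed.
Lemma hyp_oneE (A : comNzRingType) (Q : {poly A}) : 1 = (1, 0) :> hyp_ring Q.
Proof. by []. Qed.
Lemma hyp_zeroE (A : comNzRingType) (Q : {poly A}) : 0 = (0, 0) :> hyp_ring Q.
Proof. by []. Qed.

Lemma hyp_addP (A : comNzRingType) (Q : {poly A}) (a1 a2 b1 b2 : {poly A}) :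
  ((a1, a2) : hyp_ring Q) + ((b1, b2) : hyp_ring Q) = (a1 + b1, a2 + b2) :> hyp_ring Q. Proof. by []. Qed.
Lemma hyp_mulP (A : comNzRingType) (Q : {poly A}) (a1 a2 b1 b2 : {poly A}) :
  ((a1, a2) : hyp_ring Q) * ((b1, b2) : hyp_ring Q) = (a1 * b1 + a2 * b2 * Q, a1 * b2 + a2 * b1) :> hyp_ring Q.
Proof. by []. Qed.

Lemma hyp_polxD (A : comNzRingType) (Q : {poly A}) a b :
  hyp_polx Q (a + b) = hyp_polx Q a + hyp_polx Q b.
Proof. by rewrite /hyp_polx hyp_addE /= addr0. Qed.
Lemma hyp_polxM (A : comNzRingType) (Q : {poly A}) a b :
  hyp_polx Q (a * b) = hyp_polx Q a * hyp_polx Q b.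
Proof. by rewrite /hyp_polx hyp_mulE /= !mul0r mulr0 !addr0. Qed.
Lemma hyp_polx1 (A : comNzRingType) (Q : {poly A}) : hyp_polx Q 1 = 1.
Proof. by []. Qed.
Lemma hyp_polx0 (A : comNzRingType) (Q : {poly A}) : hyp_polx Q 0 = 0.
Proof. by []. Qed.
Lemma hyp_polxX (A : comNzRingType) (Q : {poly A}) a n :
  hyp_polx Q (a ^+ n) = hyp_polx Q a ^+ n.
Proof. by elim: n => [|n IH]; rewrite ?expr0 // !exprS hyp_polxM IH. Qed.
Lemma hyp_dec (A : comNzRingType) (Q : {poly A}) (a : hyp_ring Q) :
  a = hyp_polx Q a.1 + hyp_polx Q a.2 * hyp_y Q.
Proof.
case: a => a1 a2; rewrite hyp_mulE hyp_addE /hyp_polx /hyp_y /=.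
by congr pair; ring.
Qed.
Lemma hyp_y2 (A : comNzRingType) (Q : {poly A}) : hyp_y Q ^+ 2 = hyp_polx Q Q.
Proof. by rewrite expr2 hyp_mulE /hyp_polx /hyp_y /=; congr pair; ring. Qed.
Lemma hyp_x_polx (A : comNzRingType) (Q : {poly A}) : hyp_x Q = hyp_polx Q 'X.
Proof. by []. Qed.
Lemma hyp_const_polx (A : comNzRingType) (Q : {poly A}) c :
  hyp_const Q c = hyp_polx Q c%:P.
Proof. by []. Qed.

Section HM.
Variables (A B : comNzRingType) (f : {rmorphism A -> B}) (Q : {poly A}).
Let Q' := map_poly f Q.
Lemma hyp_mapD (a b : hyp_ring Q) : hyp_map Q' f (a + b) = hyp_map Q' f a + hyp_map Q' f b.
Proof. by rewrite /hyp_map !hyp_addE /= !rmorphD. Qed.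
Lemma hyp_mapM (a b : hyp_ring Q) : hyp_map Q' f (a * b) = hyp_map Q' f a * hyp_map Q' f b.
Proof. by rewrite /hyp_map !hyp_mulE /= !rmorphD !rmorphM. Qed.
Lemma hyp_map1 : hyp_map Q' f (1 : hyp_ring Q) = 1.
Proof. by rewrite /hyp_map /= rmorph1 rmorph0. Qed.
Lemma hyp_mapX (a : hyp_ring Q) n : hyp_map Q' f (a ^+ n) = hyp_map Q' f a ^+ n.
Proof. by elim: n => [|n IH]; rewrite ?expr0 ?hyp_map1 // !exprS hyp_mapM IH. Qed.
Lemma hyp_map_polx q : hyp_map Q' f (hyp_polx Q q) = hyp_polx Q' (map_poly f q).
Proof. by rewrite /hyp_map /hyp_polx /= rmorph0. Qed.
Lemma hyp_map_y : hyp_map Q' f (hyp_y Q) = hyp_y Q'.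
Proof. by rewrite /hyp_map /hyp_y /= rmorph0 rmorph1. Qed.
End HM.

Lemma taylor_aux (R : comNzRingType) (A B z h C : {poly R}) : (A + B * h) * (z + h) + C =
   (A * z + C) + (A + B * z) * h + B * (h * h).
Proof. ring. Qed.

Lemma taylor1 (R : comNzRingType) (q z h : {poly R}) : h * h = 0 ->
  q \Po (z + h) = q \Po z + (q^`() \Po z) * h.
Proof.
move=> hh; elim/poly_ind: q => [|q c IH]; first by rewrite deriv0 !comp_poly0 mul0r addr0.
rewrite derivMXaddC !comp_polyD !comp_polyM !comp_polyX !comp_polyC IH.
rewrite taylor_aux.
by rewrite hh mulr0 addr0.
Qed.

Lemma frob_poly (k : comNzRingType) (p : nat) (Hc : p \in [pchar k]) (q : {poly k}) :
  q ^+ p = map_poly (pFrobenius_aut Hc) q \Po 'X^p.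
Proof.
have Hc' : p \in [pchar {poly k}] by rewrite pchar_poly.
elim/poly_ind: q => [|q c IH].
  by rewrite rmorph0 comp_poly0 expr0n /=; case: p Hc {Hc'} => // /pcharf0; rewrite oner_eq0.
rewrite -(pFrobenius_autE Hc') pFrobenius_autD_comm; last exact: mulrC.
rewrite pFrobenius_autM_comm; last exact: mulrC.
rewrite !pFrobenius_autE IH rmorphD rmorphM /= map_polyX map_polyC /=.
by rewrite comp_polyD comp_polyM comp_polyX comp_polyC -polyC_exp pFrobenius_autE.
Qed.

Lemma sep_coprime (k : fieldType) (q : {poly k}) : separable_poly q -> coprimep q q^`().
Proof. by rewrite unlock. Qed.

Lemma ring_aux2 (R : comNzRingType) (P D B pp U Al : {poly R}) :
  pp * pp = 0 -> pp * B = pp * D ->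
  (P - pp * (D * U - 2%:R * Al * P)) + B * (pp * U) = P * (1 + pp * Al) ^+ 2.
Proof.
move=> h1 h2.
have -> : B * (pp * U) = (pp * B) * U by ring.
rewrite h2.
have -> : P * (1 + pp * Al) ^+ 2 = P - pp * (D * U - 2%:R * Al * P) + pp * D * U
   + (pp * pp) * (Al ^+ 2 * P) by ring.
by rewrite h1 mul0r addr0.
Qed.

Lemma ring_aux3 (k : comNzRingType) (D w1 w2 a b c : {poly k}) :
  w1 * a + w2 * b = 1 -> 2%:R * c = 1 ->
  b * (D * w2) - 2%:R * (- c * (D * w1)) * a = D.
Proof.
move=> h1 h2.
have -> : b * (D * w2) - 2%:R * (- c * (D * w1)) * a =
   D * (w1 * a + w2 * b) + (2%:R * c - 1) * (D * w1 * a) by ring.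
by rewrite h1 h2 subrr mul0r addr0 mulr1.
Qed.

Lemma aux_add (R : comNzRingType) (a1 b1 a2 b2 f : R) :
  (a1 + b1) + (a2 + b2) * f = (a1 + a2 * f) + (b1 + b2 * f).
Proof. ring. Qed.
Lemma aux_mul (R : comNzRingType) (a1 b1 a2 b2 f q : R) : q = f ^+ 2 ->
  (a1 * b1 + a2 * b2 * q) + (a1 * b2 + a2 * b1) * f = (a1 + a2 * f) * (b1 + b2 * f).
Proof. move=> ->; ring. Qed.
Lemma aux_c (R : comNzRingType) (s a1 a2 f : R) :
  s * a1 + s * a2 * f = s * (a1 + a2 * f).
Proof. ring. Qed.

Lemma hyp_natr (A : comNzRingType) (Q : {poly A}) n :
  (n%:R : hyp_ring Q) = (n%:R, 0).
Proof. by elim: n => // n IH; rewrite !mulrS IH hyp_addP addr0. Qed.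

Theorem proposition5p2p3
  (k : finFieldType) (p : nat) (Hp : prime p) (Hchar : p \in [pchar k])
  (Hp2 : p != 2%N)
  (* W : a model of W_2(k): a ring with p^2 = 0, a surjective reduction
     pi : W -> k whose kernel is pW, and with Ann_W(p) = pW *)
  (W : comNzRingType) (pi : {rmorphism W -> k})
  (Hpi_surj : forall c : k, exists a : W, pi a = c)
  (Hpi_ker : forall a : W, pi a = 0 <-> exists b : W, a = p%:R * b)
  (Hp2W : (p ^ 2)%:R = 0 :> W)
  (Hflat : forall a : W, p%:R * a = 0 -> pi a = 0)
  (* sigma : the Frobenius of W_2(k) *)
  (sigma : {rmorphism W -> W})
  (Hsigma : forall a : W, pi (sigma a) = pi a ^+ p)
  (* m_p : k -> W_2(k), induced by multiplication by p *)
  (mp : k -> W) (Hmp : forall a : W, mp (pi a) = p%:R * a)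
  (* the polynomial P_2 = P mod p^2, monic of odd degree 2g+1 with separable
     reduction Pbar *)
  (g : nat) (P2 : {poly W}) (HP2monic : P2 \is monic)
  (HP2deg : size P2 = (2 * g + 2)%N)
  (Hsep : separable_poly (map_poly pi P2)) :
  let Pbar := map_poly pi P2 in
  let eqn (u alpha : {poly k}) :=
    P2 ^+ p - ((map_poly sigma P2) \Po 'X^p)
    = map_poly mp (Pbar^`() ^+ p * u - 2%:R * alpha * Pbar ^+ p) in
  (exists u alpha : {poly k}, eqn u alpha) /\
  (forall u alpha : {poly k}, eqn u alpha ->
     exists F : hyp_ring P2 -> hyp_ring P2,
       [/\ frobenius_lift Pbar p sigma pi F,
           F (hyp_x P2) = hyp_x P2 ^+ p + hyp_polx P2 (map_poly mp u),
           F (hyp_y P2) = hyp_y P2 ^+ p + hyp_y P2 ^+ p * hyp_polx P2 (map_poly mp alpha) &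
           forall G : hyp_ring P2 -> hyp_ring P2,
             semilinear_ring_endo sigma G ->
             G (hyp_x P2) = F (hyp_x P2) -> G (hyp_y P2) = F (hyp_y P2) ->
             forall a, G a = F a]).
Proof.
move=> Pbar eqn.
have pk0 : (p%:R : k) = 0 by apply/eqP; rewrite -(dvdn_pcharf Hchar).
have pp0 : (p%:R : W) * p%:R = 0 by rewrite -natrM mulnn.
have mp0 : mp 0 = 0 by have := Hmp 0; rewrite rmorph0 mulr0.
have kerP : forall a : W, pi a = 0 -> p%:R * a = 0.
  by move=> a /Hpi_ker [b ->]; rewrite mulrA pp0 mul0r.
have lift_poly : forall u : {poly k}, exists U, map_poly pi U = u.
  move=> u.
  have ex : forall c : k, exists a : W, pi a == c.
    by move=> c; have [a <-] := Hpi_surj c; exists a.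
  exists (\poly_(i < size u) xchoose (ex u`_i)).
  apply/polyP => i; rewrite coef_map coef_poly; case: ltnP => hi.
    exact/eqP/(xchooseP (ex u`_i)).
  by rewrite nth_default //; exact: rmorph0.
have mp_lift : forall U, map_poly mp (map_poly pi U) = (p%:R)%:P * U.
  by move=> U; apply/polyP => i; rewrite coefCM (coef_map_id0 _ _ mp0) coef_map Hmp.
have pp_eq : forall A B : {poly W}, map_poly pi A = map_poly pi B ->
    (p%:R)%:P * A = (p%:R)%:P * B.
  move=> A B hAB; apply/polyP => i; rewrite !coefCM; apply/eqP.
  rewrite -subr_eq0 -mulrBr; apply/eqP/kerP.
  have := congr1 (fun q : {poly k} => q`_i) hAB; rewrite /= !coef_map => e.
  by rewrite rmorphB /= e subrr.
have ker_poly : forall Q : {poly W}, map_poly pi Q = 0 ->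
    exists E, Q = (p%:R)%:P * E.
  move=> Q hQ.
  have H : forall i, exists b, Q`_i == p%:R * b.
    move=> i; have : pi Q`_i = 0 by rewrite -coef_map hQ coef0.
    by move/Hpi_ker => [b ->]; exists b.
  exists (\poly_(i < size Q) xchoose (H i)).
  apply/polyP => i; rewrite coefCM coef_poly; case: ltnP => hi.
    exact/eqP/(xchooseP (H i)).
  by rewrite mulr0 nth_default.
have frob_rel : forall q : {poly W},
    map_poly pi (map_poly sigma q) = map_poly (pFrobenius_aut Hchar) (map_poly pi q).
  move=> q; apply/polyP => i.
  by rewrite (coef_map_id0 _ _ (pFrobenius_aut0 Hchar)) !coef_map /= Hsigma pFrobenius_autE.
have PiComp : forall q : {poly W},
    map_poly pi (map_poly sigma q) \Po 'X^p = (map_poly pi q) ^+ p.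
  by move=> q; rewrite frob_rel -frob_poly.
split.
  pose Q := P2 ^+ p - (map_poly sigma P2 \Po 'X^p).
  have hQ : map_poly pi Q = 0.
    by rewrite /Q rmorphB rmorphXn /= map_comp_poly map_polyXn PiComp subrr.
  have [E hE] := ker_poly Q hQ.
  pose D := map_poly pi E.
  have hc : coprimep (Pbar ^+ p) (Pbar^`() ^+ p).
    by apply: coprimep_expl; apply: coprimep_expr; exact: sep_coprime.
  have [[w1 w2] /= hw] := Bezout_eq1_coprimepP _ _ hc.
  have h2 : (2%:R : k) != 0.
    rewrite -(dvdn_pcharf Hchar) dvdn_prime2 //.
  have e2 : (2%:R : {poly k}) * ((2%:R)^-1)%:P = 1.
    by rewrite -polyC_natr -polyCM mulfV.
  exists (D * w2), (- ((2%:R)^-1)%:P * (D * w1)).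
  rewrite /eqn ring_aux3 //.
  by rewrite /D mp_lift -hE.
move=> u alpha Heq.
have [U hU] := lift_poly u.
have [Al hA] := lift_poly alpha.
pose pp : {poly W} := (p%:R)%:P.
have hpp : pp * pp = 0 by rewrite /pp -polyCM pp0.
have mpu : map_poly mp u = pp * U by rewrite -hU mp_lift.
have mpa : map_poly mp alpha = pp * Al by rewrite -hA mp_lift.
have Heq' : P2 ^+ p - (map_poly sigma P2 \Po 'X^p) =
    pp * (P2^`() ^+ p * U - 2%:R * Al * P2 ^+ p).
  rewrite Heq -mp_lift; congr (map_poly mp _).
  by rewrite rmorphB !rmorphM !rmorphXn rmorph_nat /= deriv_map hU hA.
have hB : pp * (map_poly sigma P2^`() \Po 'X^p) = pp * (P2^`() ^+ p).
  by apply: pp_eq; rewrite map_comp_poly map_polyXn PiComp rmorphXn.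
have KP : map_poly sigma P2 \Po ('X^p + map_poly mp u)
    = P2 ^+ p * (1 + map_poly mp alpha) ^+ 2.
  rewrite mpu mpa taylor1; last by rewrite mulrACA hpp mul0r.
  have hT : map_poly sigma P2 \Po 'X^p
      = P2 ^+ p - pp * (P2^`() ^+ p * U - 2%:R * Al * P2 ^+ p).
    by rewrite -Heq' opprB addrC subrK.
  by rewrite hT deriv_map ring_aux2.
pose X' := 'X^p + map_poly mp u.
pose C (q : {poly W}) := map_poly sigma q \Po X'.
pose Fy := hyp_y P2 ^+ p + hyp_y P2 ^+ p * hyp_polx P2 (map_poly mp alpha).
pose F (a : hyp_ring P2) := hyp_polx P2 (C a.1) + hyp_polx P2 (C a.2) * Fy.
have CD : forall a b, C (a + b) = C a + C b by move=> a b; rewrite /C rmorphD comp_polyD.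
have CM : forall a b, C (a * b) = C a * C b by move=> a b; rewrite /C rmorphM comp_polyM.
have CC : forall c, C c%:P = (sigma c)%:P by move=> c; rewrite /C map_polyC comp_polyC.
have C0 : C 0 = 0 by rewrite /C rmorph0 comp_poly0.
have C1 : C 1 = 1 by rewrite -polyC1 CC rmorph1.
have CX : C 'X = X' by rewrite /C map_polyX comp_polyX.
have key : hyp_polx P2 (C P2) = Fy ^+ 2.
  have -> : Fy = hyp_y P2 ^+ p * hyp_polx P2 (1 + map_poly mp alpha).
    by rewrite hyp_polxD hyp_polx1 mulrDr mulr1.
  rewrite exprMn -exprM mulnC exprM hyp_y2 -!hyp_polxX -hyp_polxM.
  by rewrite /C KP.
have Fpair : forall a1 a2, F (a1, a2) = hyp_polx P2 (C a1) + hyp_polx P2 (C a2) * Fy.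
  by [].
have FD : forall a b, F (a + b) = F a + F b.
  case=> a1 a2 [b1 b2]; rewrite hyp_addP !Fpair !CD !hyp_polxD; exact: aux_add.
have FM : forall a b, F (a * b) = F a * F b.
  case=> a1 a2 [b1 b2]; rewrite hyp_mulP !Fpair !CD !CM !hyp_polxD !hyp_polxM; exact: aux_mul.
have F1 : F 1 = 1 by rewrite hyp_oneE Fpair C0 C1 hyp_polx1 hyp_polx0 mul0r addr0.
have FC : forall c a, F (hyp_const P2 c * a) = hyp_const P2 (sigma c) * F a.
  move=> c [a1 a2]; rewrite /hyp_const hyp_mulP !mul0r !addr0 !Fpair !CM !CC !hyp_polxM.
  rewrite -!hyp_const_polx; exact: aux_c.
have Fx : F (hyp_x P2) = hyp_polx P2 X'.
  by rewrite /hyp_x Fpair CX C0 hyp_polx0 mul0r addr0.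
have Fyy : F (hyp_y P2) = Fy.
  by rewrite /hyp_y Fpair C0 C1 hyp_polx0 hyp_polx1 mul1r add0r.
exists F; split.
- split; first by split; [exact: FD | exact: FM | exact: F1 | exact: FC].
  have pik : map_poly pi pp = 0 by rewrite /pp map_polyC /= rmorph_nat pk0.
  have mFy : hyp_map Pbar pi Fy = hyp_y Pbar ^+ p.
    rewrite /Fy hyp_mapD hyp_mapM hyp_mapX hyp_map_y hyp_map_polx mpa rmorphM /= pik.
    by rewrite mul0r hyp_polx0 mulr0 addr0.
  have mC : forall q, map_poly pi (C q) = (map_poly pi q) ^+ p.
    move=> q; rewrite /C map_comp_poly /X' rmorphD /= map_polyXn mpu rmorphM /= pik.
    by rewrite mul0r addr0 PiComp.
  have chH : p \in [pchar (hyp_ring Pbar)].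
    apply/andP; split => //; rewrite hyp_natr -polyC_natr pk0 //.
  have frobD : forall x y : hyp_ring Pbar, (x + y) ^+ p = x ^+ p + y ^+ p.
    by move=> x y; rewrite -!(pFrobenius_autE chH) pFrobenius_autD_comm //; exact: mulrC.
  case=> a1 a2; rewrite Fpair hyp_mapD hyp_mapM !hyp_map_polx mFy !mC.
  have -> : hyp_map Pbar pi ((a1, a2) : hyp_ring P2) =
      hyp_polx Pbar (map_poly pi a1) + hyp_polx Pbar (map_poly pi a2) * hyp_y Pbar.
    by rewrite [LHS]hyp_dec.
  by rewrite frobD exprMn -!hyp_polxX.
- by rewrite Fx hyp_polxD hyp_polxX.
- exact: Fyy.
- move=> G [GD GM G1 GC] GX GY a.
  have G0 : G 0 = 0 by apply: (addrI (G 0)); rewrite -GD !addr0.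
  have Gpolx : forall q, G (hyp_polx P2 q) = hyp_polx P2 (C q).
    elim/poly_ind => [|q c IH]; first by rewrite hyp_polx0 G0 C0 hyp_polx0.
    rewrite hyp_polxD hyp_polxM GD GM IH -hyp_x_polx GX Fx -hyp_const_polx.
    have -> : G (hyp_const P2 c) = hyp_const P2 (sigma c).
      by rewrite -[hyp_const P2 c]mulr1 GC G1 mulr1.
    by rewrite CD CM CX CC hyp_const_polx -hyp_polxM -hyp_polxD.
  case: a => a1 a2; rewrite {1}(hyp_dec _ P2 (a1, a2)) GD GM !Gpolx GY Fyy Fpair //.
Qed.
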